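(* For each positive integer $n\ge 4$, there exists a family of $n$ sidigraphs of order $4^n$ which are pairwise cospectral, each having only integer eigenvalues, and each being strongly connected, non symmetric and non cycle balanced.
   Context: A sidigraph is a digraph (no loops, at most one arc from $u$ to $v$) with a sign $\pm1$ on each arc; its adjacency matrix has entry $\sigma(v_i,v_j)$ if there is an arc from $v_i$ to $v_j$ and $0$ otherwise, and its eigenvalues/spectrum are those of this matrix (spectrum as a multiset). Two sidigraphs are cospectral if they have the same spectrum. A sidigraph is strongly connected if its underlying digraph is. It is symmetric if whenever $(u,v)$ is an arc, $(v,u)$ is an arc with the same sign. The sign of a cycle is the product of the signs of its arcs; a sidigraph is cycle balanced if every directed cycle is positive, non cycle balanced otherwise. *)

(* Defs.v *)
From HB Require Import structures.
From mathcomp Require Import all_boot all_order all_algebra fingroup perm algC.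
Set Implicit Arguments. Unset Strict Implicit. Unset Printing Implicit Defensive.
Import Order.TTheory GRing.Theory Num.Theory.
Local Open Scope ring_scope.

(* A sidigraph of order N on the vertex set 'I_N is represented by its
   adjacency matrix A : 'M[int]_N: A i j = sign of the arc (i,j) if there is
   an arc from i to j, and 0 otherwise. *)
Definition is_sidigraph (N : nat) (A : 'M[int]_N) : Prop :=
  (forall i j, A i j = 0 \/ A i j = 1 \/ A i j = -1) /\ (forall i, A i i = 0).

Definition arc (N : nat) (A : 'M[int]_N) : rel 'I_N := fun i j => A i j != 0.

Definition adjC (N : nat) (A : 'M[int]_N) : 'M[algC]_N :=
  map_mx (fun x : int => x%:~R) A.

Definition cospectral (N : nat) (A B : 'M[int]_N) : Prop :=
  forall z : algC, mup z (char_poly (adjC A)) = mup z (char_poly (adjC B)).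

Definition integer_eigenvalues (N : nat) (A : 'M[int]_N) : Prop :=
  forall z : algC, eigenvalue (adjC A) z -> z \is a Num.int.

Definition strongly_connected (N : nat) (A : 'M[int]_N) : Prop :=
  forall i j : 'I_N, connect (arc A) i j.

Definition symmetric_sidigraph (N : nat) (A : 'M[int]_N) : Prop :=
  forall i j : 'I_N, A i j != 0 -> A j i = A i j.

Definition directed_cycle (N : nat) (A : 'M[int]_N) (c : seq 'I_N) : bool :=
  [&& c != [::], uniq c & path.cycle (arc A) c].

Definition cycle_sign (N : nat) (A : 'M[int]_N) (c : seq 'I_N) : int :=
  \prod_(p <- zip c (rot 1 c)) A p.1 p.2.

Definition cycle_balanced (N : nat) (A : 'M[int]_N) : Prop :=
  forall c, directed_cycle A c -> cycle_sign A c = 1.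

Definition sidigraph_iso (N : nat) (A B : 'M[int]_N) : Prop :=
  exists s : 'S_N, forall i j, B (s i) (s j) = A i j.

(* Main.v *)
Require Import Defs.
From HB Require Import structures.
From mathcomp Require Import all_boot all_order all_algebra fingroup perm algC.
From mathcomp Require Import zify ring lra.
Set Implicit Arguments. Unset Strict Implicit. Unset Printing Implicit Defensive.
Import Order.TTheory GRing.Theory Num.Theory.
Local Open Scope ring_scope.
Lemma cp_nil (N : nat) (M : 'M[algC]_N) : M *m M = 0 -> char_poly M = 'X^N.
Proof.
move=> MM.
have root0 z : root (char_poly M) z -> z = 0.
  rewrite -eigenvalue_root_char => /eigenvalueP [v vM vnz].
  have : v *m M *m M = (z^+2) *: v by rewrite vM -scalemxAl vM scalerA expr2.
  rewrite -mulmxA MM mulmx0 => /esym /eqP.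
  by rewrite scaler_eq0 (negbTE vnz) orbF expf_eq0 /= => /eqP.
have [r Hr] := closed_field_poly_normal (char_poly M).
rewrite (monicP (char_poly_monic M)) scale1r in Hr.
have Hs : size r = N.
  have := size_char_poly M; rewrite Hr size_prod_XsubC; case=> //.
have /all_pred1P Er : all (pred1 0) r.
  by apply/allP => z zr; apply/eqP/root0; rewrite Hr root_prod_XsubC.
rewrite Hr Er Hs; elim: N {M MM root0 Hr Hs Er} => [|N IH]; first by rewrite big_nil expr0.
by rewrite /= big_cons IH subr0 exprS.
Qed.
Definition aF (k x : nat) : int := if (x < k)%N then -1 else 1.
Definition bF (q k x : nat) : int := if (x < q)%N then aF k x else - aF k x.
Definition idx (q x : nat) : nat := if (x < 2 * q)%N then x else (x - 2 * q)%N.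
Definition Aent (q k x y : nat) : int :=
  if (x < 2 * q)%N == (y < 2 * q)%N then 0 else aF k (idx q x) * bF q k (idx q y).
Definition Amat (N q k : nat) : 'M[int]_N := \matrix_(i, j) Aent q k i j.

Lemma aF_sq k x : aF k x * aF k x = 1.
Proof. by rewrite /aF; case: ifP => _; rewrite ?mulrNN mulr1. Qed.

Lemma sumN N q (F : nat -> int) : N = (4 * q)%N ->
  \sum_(j < N) F j = \sum_(0 <= j < 2 * q) F j + \sum_(0 <= j < 2 * q) F (j + 2 * q)%N.
Proof.
move=> ->; rewrite -(big_mkord (fun _ => true) F) (@big_cat_nat _ _ _ (2 * q) 0 (4 * q)) //; last by lia.
congr (_ + _); rewrite -{1}(add0n (2 * q)%N) big_addn.
have -> : (4 * q - 2 * q = 2 * q)%N by lia.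
by [].
Qed.

Lemma sum_ba q k : \sum_(0 <= j < 2 * q) bF q k j * aF k j = 0.
Proof.
rewrite (@big_cat_nat _ _ _ q 0 (2 * q)) //=; last by lia.
rewrite (eq_big_nat _ _ (F2 := fun _ => 1)); last first.
  by move=> j /andP [_ jq]; rewrite /bF jq aF_sq.
rewrite [X in _ + X](eq_big_nat _ _ (F2 := fun _ => -1)); last first.
  by move=> j /andP [qj _]; rewrite /bF ltnNge qj /= mulNr aF_sq.
rewrite !sumr_const_nat subn0; have -> : (2 * q - q = q)%N by lia.
by rewrite mulNrn subrr.
Qed.

Lemma idx_lo q j : (j < 2 * q)%N -> idx q j = j.
Proof. by rewrite /idx => ->. Qed.
Lemma idx_hi q j : idx q (j + 2 * q) = j.
Proof. rewrite /idx ifF; lia. Qed.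

Lemma Amat_sq N q k : N = (4 * q)%N -> Amat N q k *m Amat N q k = 0.
Proof.
move=> HN; apply/matrixP => i l; rewrite !mxE.
under eq_bigr => j _ do rewrite !mxE.
rewrite (sumN (fun y => Aent q k i y * Aent q k y l) HN).
rewrite (eq_big_nat _ _ (F2 := fun j => (if (i < 2 * q)%N == true then 0 else aF k (idx q i) * bF q k j) * (if true == (l < 2 * q)%N then 0 else aF k j * bF q k (idx q l)))); last first.
  move=> j /andP [_ jq].
  by rewrite /Aent jq (idx_lo jq).
have -> : \sum_(0 <= j < 2 * q) Aent q k i (j + 2 * q) * Aent q k (j + 2 * q) l = \sum_(0 <= j < 2 * q) (if (i < 2 * q)%N == false then 0 else aF k (idx q i) * bF q k j) * (if false == (l < 2 * q)%N then 0 else aF k j * bF q k (idx q l)).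
  apply: eq_big_nat => j _; rewrite /Aent idx_hi.
  by have -> : ((j + 2 * q) < 2 * q)%N = false by lia.
have E : forall c d, \sum_(0 <= j < 2 * q) (c * bF q k j) * (aF k j * d) = 0.
  move=> c d; rewrite (eq_bigr (fun j => c * d * (bF q k j * aF k j))); last by move=> j _; ring.
  by rewrite -big_distrr /= sum_ba mulr0.
case: (i < 2 * q)%N; case: (l < 2 * q)%N => /=;
  rewrite ?E ?big1 ?addr0 ?add0r // => j _; by rewrite ?mul0r ?mulr0.
Qed.

Lemma sum_const_range (m p : nat) (c : int) (F : nat -> int) : (m <= p)%N ->
  (forall x, (m <= x < p)%N -> F x = c) -> \sum_(m <= x < p) F x = c *+ (p - m).
Proof. by move=> _ H; rewrite (eq_big_nat _ _ H) sumr_const_nat. Qed.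

Lemma sum_a q k : (k <= q)%N -> \sum_(0 <= x < 2 * q) aF k x = 2 * (q : int) - 2 * (k : int).
Proof.
move=> kq; rewrite (@big_cat_nat _ _ _ k 0 (2 * q)) //=; last by lia.
rewrite (@sum_const_range 0 k (-1)) //; last by move=> x /andP [_ xk]; rewrite /aF xk.
rewrite (@sum_const_range k (2 * q) 1) //; last 2 first.
- lia.
- by move=> x /andP [kx _]; rewrite /aF ltnNge kx.
rewrite subn0 mulNrn.
lia.
Qed.

Lemma sum_b q k : (k <= q)%N -> \sum_(0 <= x < 2 * q) bF q k x = - 2 * (k : int).
Proof.
move=> kq; rewrite (@big_cat_nat _ _ _ q 0 (2 * q)) //=; last by lia.
rewrite (@big_cat_nat _ _ _ k 0 q) //=.
rewrite (@sum_const_range 0 k (-1)) //; last by move=> x /andP [_ xk]; rewrite /bF /aF xk (leq_trans xk kq).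
rewrite (@sum_const_range k q 1) //; last by move=> x /andP [kx xq]; rewrite /bF /aF xq ltnNge kx.
rewrite (@sum_const_range q (2 * q) (-1)) //; last 2 first.
- lia.
- by move=> x /andP [qx _]; rewrite /bF /aF ltnNge qx /= ltnNge (leq_trans kq qx).
rewrite subn0 !mulNrn. lia.
Qed.

Lemma Amat_sum N q k : N = (4 * q)%N -> (k <= q)%N ->
  \sum_(i < N) \sum_(j < N) Amat N q k i j = 2 * ((2 * (q : int) - 2 * (k : int)) * (- 2 * (k : int))).
Proof.
move=> HN kq.
have E1 : forall i : 'I_N, \sum_(j < N) Amat N q k i j =
   \sum_(0 <= j < 2 * q) Aent q k i j + \sum_(0 <= j < 2 * q) Aent q k i (j + 2 * q).
  by move=> i; under eq_bigr => j _ do rewrite mxE; rewrite (sumN (fun y => Aent q k i y) HN).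
rewrite (eq_bigr _ (fun i _ => E1 i)).
rewrite (sumN (fun x => \sum_(0 <= j < 2 * q) Aent q k x j + \sum_(0 <= j < 2 * q) Aent q k x (j + 2 * q)) HN).
have Z1 : \sum_(0 <= i < 2 * q) \sum_(0 <= j < 2 * q) Aent q k i j = 0.
  apply: big1_seq => i /andP [_]; rewrite mem_index_iota => /andP [_ iq]; apply: big1_seq => j /andP [_].
  by rewrite mem_index_iota => /andP [_ jq]; rewrite /Aent iq jq.
have Z2 : \sum_(0 <= i < 2 * q) \sum_(0 <= j < 2 * q) Aent q k (i + 2 * q) (j + 2 * q) = 0.
  apply: big1_seq => i _; apply: big1_seq => j _.
  rewrite /Aent; have -> : ((i + 2 * q) < 2 * q)%N = false by lia.
  by have -> : ((j + 2 * q) < 2 * q)%N = false by lia.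
have P1 : \sum_(0 <= i < 2 * q) \sum_(0 <= j < 2 * q) Aent q k i (j + 2 * q) =
          \sum_(0 <= i < 2 * q) \sum_(0 <= j < 2 * q) aF k i * bF q k j.
  apply: eq_big_nat => i /andP [_ iq]; apply: eq_big_nat => j _.
  rewrite /Aent iq idx_hi (idx_lo iq); have -> : ((j + 2 * q) < 2 * q)%N = false by lia.
  by [].
have P2 : \sum_(0 <= i < 2 * q) \sum_(0 <= j < 2 * q) Aent q k (i + 2 * q) j =
          \sum_(0 <= i < 2 * q) \sum_(0 <= j < 2 * q) aF k i * bF q k j.
  apply: eq_big_nat => i _; apply: eq_big_nat => j /andP [_ jq].
  rewrite /Aent jq idx_hi (idx_lo jq); have -> : ((i + 2 * q) < 2 * q)%N = false by lia.
  by [].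
rewrite !big_split /= Z1 Z2 P1 P2 add0r addr0.
have -> : \sum_(0 <= i < 2 * q) \sum_(0 <= j < 2 * q) aF k i * bF q k j =
   (\sum_(0 <= i < 2 * q) aF k i) * (\sum_(0 <= j < 2 * q) bF q k j).
  by rewrite big_distrl /=; apply: eq_bigr => i _; rewrite big_distrr.
rewrite sum_a // sum_b //.
ring.
Qed.
Lemma adjC_sq N (A : 'M[int]_N) : A *m A = 0 -> adjC A *m adjC A = 0.
Proof. move=> H. rewrite /adjC -map_mxM H. by apply/matrixP=> i j; rewrite !mxE. Qed.

Lemma aF_pm k x : aF k x = 1 \/ aF k x = -1.
Proof. by rewrite /aF; case: ifP; auto. Qed.
Lemma bF_pm q k x : bF q k x = 1 \/ bF q k x = -1.
Proof. by rewrite /bF; case: ifP => _; case: (aF_pm k x) => ->; rewrite ?opprK; auto. Qed.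

Lemma Amat_sidi N q k : is_sidigraph (Amat N q k).
Proof.
split=> [i j|i]; rewrite mxE /Aent; last by rewrite eqxx.
case: ifP => _; first by left.
by case: (aF_pm k (idx q i)) => ->; case: (bF_pm q k (idx q j)) => ->; rewrite ?mul1r ?mulN1r ?opprK; auto.
Qed.

Lemma Amat_nz N q k (i j : 'I_N) : ((i : nat) < 2 * q)%N != ((j : nat) < 2 * q)%N -> Defs.arc (Amat N q k) i j.
Proof.
rewrite /Defs.arc mxE /Aent => /negbTE ->.
by case: (aF_pm k (idx q i)) => ->; case: (bF_pm q k (idx q j)) => ->.
Qed.

Lemma Amat_sc N q k : N = (4 * q)%N -> (0 < q)%N -> strongly_connected (Amat N q k).
Proof.
move=> HN q0 i j.
have [Hij|Hij] := boolP (((i : nat) < 2 * q)%N != ((j : nat) < 2 * q)%N).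
  by apply: connect1; apply: Amat_nz.
have hP : (0 < N)%N by lia.
have hQ : (2 * q < N)%N by lia.
pose m : 'I_N := if ((i : nat) < 2 * q)%N then Ordinal hQ else Ordinal hP.
have q2 : (0 < 2 * q)%N by lia.
apply: (@connect_trans _ _ m); apply: connect1; apply: Amat_nz; move: Hij; rewrite /m;
  case: ifP => /= _; rewrite ?ltnn ?q2; by case: ((j : nat) < 2 * q)%N.
Qed.

Lemma Amat_bad N q k : N = (4 * q)%N -> (0 < q)%N -> (k <= q)%N ->
  ~ symmetric_sidigraph (Amat N q k) /\ ~ cycle_balanced (Amat N q k).
Proof.
move=> HN q0 kq.
have h0 : (0 < N)%N by lia.
have h3 : (3 * q < N)%N by lia.
pose i0 : 'I_N := Ordinal h0. pose j0 : 'I_N := Ordinal h3.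
have aq : aF k q = 1 by rewrite /aF ltnNge kq.
have E1 : Amat N q k i0 j0 = - aF k 0.
  rewrite mxE /Aent /= /idx.
  have -> : (0 < 2 * q)%N by lia.
  have -> : (3 * q < 2 * q)%N = false by lia.
  have -> : (3 * q - 2 * q = q)%N by lia.
  by rewrite /bF ltnn aq mulrN mulr1.
have E2 : Amat N q k j0 i0 = aF k 0.
  rewrite mxE /Aent /= /idx.
  have -> : (0 < 2 * q)%N by lia.
  have -> : (3 * q < 2 * q)%N = false by lia.
  have -> : (3 * q - 2 * q = q)%N by lia.
  by rewrite /bF q0 aq mul1r.
have ij : i0 != j0 by apply/eqP => /(congr1 val) /=; lia.
split.
- move=> Hs; have := Hs i0 j0; rewrite E1 E2.
  by case: (aF_pm k 0) => -> /(_ isT).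
- move=> Hb; have := Hb [:: i0; j0].
  have Hd : directed_cycle (Amat N q k) [:: i0; j0].
    rewrite /directed_cycle /= inE (negbTE ij) /= /Defs.arc E1 E2.
    by case: (aF_pm k 0) => ->.
  move=> /(_ Hd); rewrite /cycle_sign /= big_cons big_cons big_nil /= E1 E2.
  by case: (aF_pm k 0) => ->.
Qed.

Lemma iso_sum N (A B : 'M[int]_N) : sidigraph_iso A B ->
  \sum_(i < N) \sum_(j < N) B i j = \sum_(i < N) \sum_(j < N) A i j.
Proof.
case=> s Hs; rewrite (reindex_inj (@perm_inj _ s)); apply: eq_bigr => i _.
by rewrite (reindex_inj (@perm_inj _ s)); apply: eq_bigr => j _.
Qed.

Lemma nil_props N (A : 'M[int]_N) : A *m A = 0 ->
  char_poly (adjC A) = 'X^N /\ integer_eigenvalues A.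
Proof.
move=> H; have Hc := cp_nil (adjC_sq H); split=> // z.
rewrite eigenvalue_root_char Hc /root hornerXn => /eqP.
move=> Hz; have : z ^+ N == 0 by rewrite Hz.
rewrite expf_eq0 => /andP [_ /eqP ->]; exact: rpred0.
Qed.

Theorem theorem2p11 (n : nat) : (4 <= n)%N ->
  exists F : 'I_n -> 'M[int]_(4 ^ n),
    (forall k, is_sidigraph (F k)) /\
    (forall k l, k != l -> ~ sidigraph_iso (F k) (F l)) /\
    (forall k l, cospectral (F k) (F l)) /\
    (forall k, integer_eigenvalues (F k) /\ strongly_connected (F k) /\
               ~ symmetric_sidigraph (F k) /\ ~ cycle_balanced (F k)).
Proof.
case: n => [//|n'] n4.
set q := (4 ^ n')%N.
have HN : (4 ^ n'.+1 = 4 * q)%N by rewrite expnS.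
have big : (2 * n' < q)%N.
  have := ltn_expl (2 * n') (isT : (1 < 2)%N).
  by rewrite /q expnM.
have q0 : (0 < q)%N by lia.
exists (fun k : 'I_n'.+1 => Amat (4 ^ n'.+1) q k).
have kq : forall k : 'I_n'.+1, ((k : nat) <= q)%N by move=> k; have := ltn_ord k; lia.
split; first by move=> k; apply: Amat_sidi.
split.
  move=> k l kl Hiso; have := iso_sum Hiso; rewrite !Amat_sum //.
  have kl' : (k : nat) != l by [].
  have hk := ltn_ord k; have hl := ltn_ord l.
  move: kl'; move: (k : nat) (l : nat) hk hl => x y hx hy.
  move=> /eqP xy E; apply: xy.
  have : Posz x * (Posz q - Posz x) = Posz y * (Posz q - Posz y) by lia.
  nia.
split.
  move=> k l; rewrite /cospectral => z.
  rewrite (proj1 (nil_props (Amat_sq k HN))) (proj1 (nil_props (Amat_sq l HN))) //.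
move=> k; split; first exact: (proj2 (nil_props (Amat_sq k HN))).
split; first exact: Amat_sc.
exact: Amat_bad.
Qed.
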